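(* For odd $N\ge3$, let $K=\tilde F(N)$, $L=N(N+1)$, $n=N$, let $C^0,\dots,C^{K-1}$ be the sequences $c^m_i=\omega_{N+1}^{\pi_m(\langle i\rangle_N)\cdot i}$ ($0\le i<L$) built from a $K\times N$ circular Florentine rectangle with rows $\pi_0,\dots,\pi_{K-1}$, let $\theta_{\max}$ be their maximum periodic correlation magnitude (over all autocorrelations at shifts $0<\tau<L$ and all cross-correlations between distinct sequences at shifts $0\le\tau<L$), and let $\theta_{opti}=L\sqrt{\frac{(K-1)L+n}{(L-n)(KL-1)}}$. Then $\theta_{\max}/\theta_{opti}\to1$ as $N\to\infty$ through each of the following sets of integers: (1) $N=p$ an odd prime; (2) $N=p(p+k)$ where $k$ is a fixed positive integer and $p$, $p+k$ are odd primes; (3) $N=\prod_{i=1}^h(m+k_i)$, where $\mathcal{H}=\{k_1,\dots,k_h\}$ is a fixed admissible set of distinct nonnegative integers and $m+k_1,\dots,m+k_h$ are odd primes.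
   Context: $\omega_n=e^{2\pi\sqrt{-1}/n}$. An $M\times N$ circular Florentine rectangle (CFR) over $\mathbb{Z}_N$ is an $M\times N$ array whose rows $\pi_i:\mathbb{Z}_N\to\mathbb{Z}_N$ are permutations such that for every $m\in\mathbb{Z}_N\setminus\{0\}$ and all $i,j,x,y$: $(\pi_i(x),\pi_i(x+m))=(\pi_j(y),\pi_j(y+m))$ (indices mod $N$) iff $i=j$ and $x=y$. $\tilde F(N)$ is the largest $M$ for which an $M\times N$ CFR exists. Periodic correlation: $\theta_{C,D}(\tau)=\sum_{t=0}^{L-1}c_td^*_{\langle t+\tau\rangle_L}$. A finite set $\mathcal{H}$ of integers is admissible if for every prime $q$ the elements of $\mathcal{H}$ do not cover all residue classes modulo $q$. *)

(* Defs.v *)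
From HB Require Import structures.
From mathcomp Require Import all_boot all_order all_algebra all_fingroup.
From mathcomp Require Import reals trigo.
From mathcomp Require Import complex.

Set Implicit Arguments.
Unset Strict Implicit.
Unset Printing Implicit Defensive.

Import Order.TTheory GRing.Theory Num.Theory.
Local Open Scope ring_scope.

Lemma ord_pos_N (N : nat) (x : 'I_N) : (0 < N)%N.
Proof. exact: leq_ltn_trans (leq0n x) (ltn_ord x). Qed.

Definition ord_shift (N : nat) (x : 'I_N) (m : nat) : 'I_N :=
  Ordinal (ltn_pmod (x + m) (ord_pos_N x)).

Definition is_CFR (M N : nat) (pi : 'I_M -> {perm 'I_N}) : Prop :=
  forall m : 'I_N, (m : nat) != 0%N ->
  forall (i j : 'I_M) (x y : 'I_N),
    (pi i x, pi i (ord_shift x m)) = (pi j y, pi j (ord_shift y m))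
    <-> (i = j /\ x = y).

Definition CFR_exists (M N : nat) : Prop :=
  exists pi : 'I_M -> {perm 'I_N}, is_CFR pi.

Definition is_Ftilde (N K : nat) : Prop :=
  CFR_exists K N /\ forall M : nat, CFR_exists M N -> (M <= K)%N.

Section Seqs.
Variable R : realType.
Local Open Scope complex_scope.

Definition omega (n : nat) : R[i] :=
  (cos (2 * pi / n%:R) +i* sin (2 * pi / n%:R))%C.

Definition pcorr (L : nat) (c d : nat -> R[i]) (tau : nat) : R[i] :=
  \sum_(t < L) c t * (d ((t + tau) %% L)%N)^*.

Definition cmag (z : R[i]) : R := complex.Re `|z|.

(* the value pi(<k>_N) as a natural number (k mod N is always < N when N > 0) *)
Definition perm_at_mod (N : nat) (p : {perm 'I_N}) (k : nat) : nat :=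
  if @insub nat (fun x => (x < N)%N) 'I_N (k %% N)%N is Some x then nat_of_ord (p x) else 0%N.

Definition cfr_seq (K N : nat) (pi : 'I_K -> {perm 'I_N}) (m : 'I_K) (i : nat) : R[i] :=
  omega N.+1 ^+ (perm_at_mod (pi m) i * i)%N.

Definition theta_max (K N : nat) (pi : 'I_K -> {perm 'I_N}) : R :=
  let L := (N * N.+1)%N in
  \big[Num.max/0]_(a < K) \big[Num.max/0]_(b < K)
    \big[Num.max/0]_(tau < L | (a != b) || ((tau : nat) != 0%N))
      cmag (pcorr L (cfr_seq pi a) (cfr_seq pi b) tau).

Definition theta_opti (K L n : nat) : R :=
  L%:R * Num.sqrt (((K%:R - 1) * L%:R + n%:R) / ((L%:R - n%:R) * (K%:R * L%:R - 1))).
End Seqs.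

Definition admissible (H : seq nat) : Prop :=
  forall q : nat, prime q -> exists r : nat, (r < q)%N /\ forall k, k \in H -> (k %% q)%N != r.

Definition odd_prime (p : nat) : bool := prime p && odd p.

Definition family1 (N : nat) : Prop := odd_prime N.

Definition family2 (k N : nat) : Prop :=
  exists p : nat, [/\ odd_prime p, odd_prime (p + k) & N = (p * (p + k))%N].

Definition family3 (H : seq nat) (N : nat) : Prop :=
  exists m : nat, (forall k, k \in H -> odd_prime (m + k)) /\ N = (\prod_(k <- H) (m + k))%N.

Definition ratio_tends_to_1 (R : realType) (S : nat -> Prop) : Prop :=
  forall eps : R, 0 < eps -> exists N0 : nat, forall N : nat, (N0 <= N)%N -> S N ->
    forall (K : nat) (pi : 'I_K -> {perm 'I_N}), is_Ftilde N K -> is_CFR pi ->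
      `| theta_max R pi / theta_opti R K (N * N.+1) N - 1 | < eps.

(* Main.v *)
Require Import Defs.
From HB Require Import structures.
From mathcomp Require Import all_boot all_order all_algebra all_fingroup.
From mathcomp Require Import reals trigo complex.
From mathcomp Require Import ring lra zify.
Import Order.TTheory GRing.Theory Num.Theory.
Set Implicit Arguments.
Unset Strict Implicit.
Unset Printing Implicit Defensive.


Lemma mul_cancel N q x y : coprime q N -> q * x = q * y %[mod N] -> x = y %[mod N].
Proof.
move=> cq.
wlog le : x y / x <= y.
  move=> H e; case: (leqP x y) => [h|h]; first exact: H.
  by apply/esym/H; [exact: ltnW|].
move/esym/eqP; rewrite eqn_mod_dvd ?leq_mul2l ?le ?orbT // -mulnBr Gauss_dvdr.
  by rewrite -eqn_mod_dvd // => /eqP.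
by rewrite coprime_sym.
Qed.

Section Mult.
Variables (N : nat) (N0 : 0 < N).

Definition mulf (q : nat) (x : 'I_N) : 'I_N := Ordinal (ltn_pmod (q * x) N0).

Lemma mulf_inj q : coprime q N -> injective (mulf q).
Proof.
move=> cq x y /(congr1 val) /= /(mul_cancel cq).
by rewrite !modn_small // => /ord_inj.
Qed.

Lemma exists_cfr c : (forall d, 0 < d < c -> coprime d N) -> CFR_exists c.-1 N.
Proof.
move=> H.
have hc (a : 'I_c.-1) : 0 < a.+1 < c by have := ltn_ord a; lia.
exists (fun a => perm (mulf_inj (H _ (hc a)))).
move=> m m0 i j x y; split; last by case=> -> ->.
rewrite !permE; case=> e1 e2.
idtac.
rewrite /ord_shift /= !modnMmr in e2.
have e3 : (j.+1 * y + i.+1 * m = j.+1 * y + j.+1 * m %[mod N]).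
  by rewrite -modnDml -e1 modnDml -!mulnDr e2.
move: e3 => /eqP; rewrite eqn_modDl => /eqP e3.
have ij : i = j.
  clear e1 e2; wlog lt : i j e3 / i < j.
    move=> W; case: (ltngtP i j) => [h|h|h]; [exact: W | | exact: ord_inj].
    by apply/esym/W.
  exfalso; move/eqP: e3; rewrite eq_sym eqn_mod_dvd; last by rewrite leq_mul2r ltnW ?orbT.
  rewrite -mulnBl Gauss_dvdr.
    move=> dv; have mpos : 0 < m by rewrite lt0n.
    by have := dvdn_leq mpos dv; have := ltn_ord m; lia.
  by rewrite coprime_sym; apply: H; have := ltn_ord j; lia.
subst j; split => //.
by apply: (mulf_inj (H _ (hc i))); apply: ord_inj.
Qed.

Lemma Ftilde_ge K c : is_Ftilde N K -> (forall d, 0 < d < c -> coprime d N) -> c.-1 <= K.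
Proof. by move=> [_ mx] H; apply: mx; apply: exists_cfr. Qed.
End Mult.

Local Open Scope ring_scope.


Section Roots.
Variable R : realType.
Local Open Scope complex_scope.

Lemma cmulE (a b c d : R) : ((a +i* b) * (c +i* d) = (a*c - b*d) +i* (a*d + b*c))%C.
Proof. by []. Qed.

Variable n : nat.
Let x : R := 2 * pi / n.+1%:R.
Let z : R[i] := omega R n.+1.

Lemma zE : z = (cos x +i* sin x)%C. Proof. by []. Qed.

Lemma zX k : z ^+ k = (cos (k%:R * x) +i* sin (k%:R * x))%C.
Proof.
elim: k => [|k IH]; first by rewrite expr0 mul0r cos0 sin0.
rewrite exprS IH zE cmulE.
rewrite -natr1 mulrDl mul1r cosD sinD.
congr (_ +i* _); lra.
Qed.

Lemma zXN1 : z ^+ n.+1 = 1.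
Proof.
rewrite zX /x mulrCA mulfV ?pnatr_eq0 // mulr1 mulr_natl cos2pi sin2pi.
by [].
Qed.

Lemma zXmod k : z ^+ k = z ^+ (k %% n.+1).
Proof. by rewrite {1}(divn_eq k n.+1) exprD mulnC exprM zXN1 expr1n mul1r. Qed.

Lemma zz : z * z^* = 1.
Proof.
  rewrite zE /= cmulE; congr (_ +i* _); last by ring.
  by rewrite mulrN opprK -!expr2 cos2Dsin2.
Qed.

Lemma zJ : z^* = z ^+ n.
Proof.
have z0 : z != 0 by apply/eqP=> h; move: zz; rewrite h mul0r => /eqP; rewrite eq_sym oner_eq0.
apply: (mulfI z0); by rewrite zz -exprS zXN1.
Qed.

Lemma zXJ k : (z ^+ k)^* = z ^+ (n * k).
Proof. by rewrite rmorphXn exprM -zJ. Qed.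

Lemma zXJr k : ((z ^+ k)^*)%R = z ^+ (n * k).
Proof. exact: zXJ. Qed.

Lemma normz k : `|z ^+ k| = 1.
Proof.
rewrite normrX.
have : `|z| ^+ 2 = 1.
  by rewrite sqr_normc; exact: zz.
have := normr_ge0 z.
move: (`|z|) => r r0 /eqP; rewrite sqrf_eq1 => /orP[/eqP->|/eqP r1]; first by rewrite expr1n.
by move: r0; rewrite r1 ler0N1.
Qed.

Lemma zneq1 j : (0 < j < n.+1)%N -> z ^+ j != 1.
Proof.
move=> /andP[j0 jn]; rewrite zX; apply/negP => /eqP [c1 s0].
set y := j%:R * x in c1 s0.
have yE : y = (y / 2) *+ 2 by rewrite -mulr_natr mulfVK ?pnatr_eq0.
have hp : 0 < y / 2 < pi.
  have -> : y / 2 = pi * (j%:R / n.+1%:R).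
    by rewrite /y /x; field; rewrite nat1r pnatr_eq0.
  apply/andP; split; first by rewrite !mulr_gt0 ?invr_gt0 ?ltr0n ?pi_gt0.
  by rewrite gtr_pMr ?pi_gt0 // ltr_pdivrMr ?ltr0n // mul1r ltr_nat.
have := sin_gt0_pi hp.
have : sin (y / 2) = 0.
  apply: cos1sin0.
  have : cos (y / 2) ^+ 2 = 1.
    move: c1; rewrite {1}yE cos_mulr2n -mulr_natr; set c := cos _ ^+ 2; clearbody c; move=> h; lra.
  by move/eqP; rewrite sqr_norm_eq1 => /eqP.
by move=> ->; rewrite ltxx.
Qed.


Lemma zX_eq1 k : z ^+ k = 1 -> (n.+1 %| k)%N.
Proof.
rewrite zXmod => h; rewrite /dvdn; have [r0|r0] := posnP (k %% n.+1); first by [].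
by move: (@zneq1 (k %% n.+1)); rewrite r0 ltn_pmod //= => /(_ isT) /eqP /(_ h).
Qed.

Lemma geo (w : R[i]) : w != 1 -> w ^+ n.+1 = 1 -> \sum_(s < n.+1) w ^+ s = 0.
Proof.
move=> w1 wn; have := subrX1 w n.+1; rewrite wn subrr => /esym/eqP.
by rewrite mulf_eq0 subr_eq0 (negbTE w1) => /eqP.
Qed.

End Roots.


Lemma sum_split (V : nmodType) (F : nat -> V) N M :
  \sum_(t < (N * M)%N) F t = \sum_(s < M) \sum_(u < N) F (s * N + u)%N.
Proof.
elim: M => [|M IH]; first by rewrite muln0 !big_ord0.
rewrite big_ord_recr /= -IH mulnSr big_split_ord /=.
by congr (_ + _); apply: eq_bigr => u _ /=; rewrite mulnC.
Qed.

Lemma eqAB (N A B : nat) : (A < N.+1)%N -> (B < N.+1)%N -> (N.+1 %| N * (A + N * B))%N -> A = B.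
Proof.
move=> hA hB h.
have h1 : (N.+1 %| A + N * B)%N.
  by rewrite -(dvdn_addr _ h) [X in (_ %| X)%N]addnC -mulSn dvdn_mulr.
have e1 : (((A + N * B) + B) %% N.+1 = B %% N.+1)%N by rewrite -modnDml (eqP h1) add0n.
have e2 : ((A + N * B) + B = B * N.+1 + A)%N by rewrite mulnS; lia.
by rewrite -(modn_small hA) -(modn_small hB) -e1 e2 modnMDl.
Qed.

Lemma ord_shiftE N (x : 'I_N) (m : nat) : (ord_shift x m : nat) = ((x + m) %% N)%N.
Proof. by []. Qed.

Section Corr.
Variables (R : realType) (N K : nat) (pi : 'I_K -> {perm 'I_N}).
Hypothesis N0 : (0 < N)%N.
Local Notation z := (omega R N.+1).
Local Open Scope complex_scope.

Definition ordN (k : nat) : 'I_N := Ordinal (ltn_pmod k N0).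

Lemma pamE (p : {perm 'I_N}) k : perm_at_mod p k = p (ordN k).
Proof.
rewrite /perm_at_mod; case: insubP => [u _ uE|]; last by rewrite ltn_pmod.
by congr (nat_of_ord (p _)); apply: val_inj.
Qed.

Lemma zXeq e1 e2 : e1 = e2 %[mod N.+1] -> z ^+ e1 = z ^+ e2.
Proof. by move=> e; rewrite zXmod e -zXmod. Qed.

Lemma corrE (a b : 'I_K) tau :
  pcorr (N * N.+1)%N (cfr_seq R pi a) (cfr_seq R pi b) tau =
  \sum_(u < N) (if pi a u == pi b (ordN (u + tau)) then
     N.+1%:R * z ^+ (pi a u * u + N * (pi b (ordN (u + tau)) * (u + tau)))%N else 0).
Proof.
rewrite /pcorr (sum_split (fun t => cfr_seq R pi a t * (cfr_seq R pi b ((t + tau) %% (N * N.+1)))^*)%R N N.+1) exchange_big /=; apply: eq_bigr => u _.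
set A := (pi a u : nat); set B := (pi b (ordN (u + tau)) : nat).
have term (s : nat) : cfr_seq R pi a (s * N + u)%N *
     (cfr_seq R pi b ((s * N + u + tau) %% (N * N.+1))%N)^*
   = z ^+ (A * u + N * (B * (u + tau)))%N * (z ^+ (N * (A + N * B))%N) ^+ s.
  rewrite /cfr_seq !pamE.
  have -> : ordN (s * N + u)%N = u by apply: val_inj; rewrite /= modnMDl modn_small.
  have -> : ordN ((s * N + u + tau) %% (N * N.+1))%N = ordN (u + tau).
    by apply: val_inj; rewrite /= modn_dvdm ?dvdn_mulr // -addnA modnMDl.
  rewrite -/A -/B zXJr (@zXeq (N * (B * _))%N (N * (B * (s * N + u + tau)))%N); last first.
    by rewrite -modnMmr -[in RHS]modnMmr -(modnMmr B) -[in RHS](modnMmr B) modn_dvdm ?dvdn_mull.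
  rewrite -!exprD -exprM -exprD; congr (_ ^+ _); ring.
under eq_bigr => s _ do rewrite term.
rewrite -mulr_sumr.
have An : (A < N.+1)%N by rewrite /A; have := ltn_ord (pi a u); lia.
have Bn : (B < N.+1)%N by rewrite /B; have := ltn_ord (pi b (ordN (u + tau))); lia.
case: eqP => [AB|AB].
  have AB' : A = B by rewrite /A /B AB.
  have -> : z ^+ (N * (A + N * B))%N = 1.
    by rewrite AB' -mulSn mulnCA exprM zXN1 expr1n.
  by rewrite (eq_bigr (fun _ => 1)) => [|s _]; rewrite ?expr1n // sumr_const card_ord mulrC.
rewrite geo ?mulr0 //.
  apply/negP => /eqP /zX_eq1 /(eqAB An Bn) AB'; apply: AB; exact: val_inj.
by rewrite -exprM mulnC exprM zXN1 expr1n.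
Qed.

Lemma ordNE k : (ordN k : nat) = (k %% N)%N. Proof. by []. Qed.

Lemma uniq_match (a b : 'I_K) tau : is_CFR pi -> (a != b) || (tau %% N != 0)%N ->
  forall u1 u2 : 'I_N, pi a u1 = pi b (ordN (u1 + tau)) -> pi a u2 = pi b (ordN (u2 + tau)) -> u1 = u2.
Proof.
move=> cfr hab.
suff H : forall u1 u2 : 'I_N, (u1 < u2)%N -> pi a u1 = pi b (ordN (u1 + tau)) ->
   pi a u2 = pi b (ordN (u2 + tau)) -> False.
  move=> u1 u2 h1 h2; case: (ltngtP u1 u2) => [lt|gt|eq]; last exact: val_inj.
  - by case: (H _ _ lt h1 h2).
  - by case: (H _ _ gt h2 h1).
move=> u1 u2 lt h1 h2.
have mN : (u2 - u1 < N)%N.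
  have := ltn_ord u2; move: (u2 : nat) (u1 : nat) lt => x y; lia.
pose m := Ordinal mN.
have m0 : (m : nat) != 0%N by rewrite /= subn_eq0 -ltnNge.
have mE : (m : nat) = (u2 - u1)%N by [].
have e1 : ord_shift u1 m = u2.
  by apply: ord_inj; rewrite ord_shiftE mE subnKC ?(ltnW lt) // modn_small.
have e2 : ord_shift (ordN (u1 + tau)) m = ordN (u2 + tau).
  apply: ord_inj; rewrite ord_shiftE mE ordNE ordNE modnDml; congr (_ %% _)%N.
  move: (u2 : nat) (u1 : nat) lt => x y; lia.
have := (cfr m m0 a b u1 (ordN (u1 + tau))).1.
rewrite e1 e2 h1 h2 => /(_ erefl) [ab u1E].
move: hab; rewrite ab eqxx /= => /negP; apply.
have : (u1 + 0 == u1 + tau %[mod N])%N.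
  by rewrite addn0 {1}u1E ordNE modn_mod.
by rewrite eqn_modDl mod0n eq_sym.
Qed.

Lemma cmag_le (x : R[i]) (r : R) : `|x| <= r%:C -> cmag x <= r.
Proof. by rewrite lecE => /andP[_]. Qed.

Lemma natC k : (k%:R : R[i]) = (k%:R : R)%:C.
Proof. by rewrite rmorph_nat. Qed.

Lemma corr_le (a b : 'I_K) tau : is_CFR pi -> (a != b) || (tau %% N != 0)%N ->
  cmag (pcorr (N * N.+1)%N (cfr_seq R pi a) (cfr_seq R pi b) tau) <= N.+1%:R.
Proof.
move=> cfr hab; apply: cmag_le; rewrite corrE.
case: (pickP (fun u : 'I_N => pi a u == pi b (ordN (u + tau)))) => [u0 Pu0|none].
  rewrite (bigD1 u0) //= Pu0 big1 ?addr0.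
    by rewrite normrM normz normr_nat mulr1 natC.
  move=> v vu0; case: eqP => // hv; exfalso; move/eqP: vu0; apply.
  exact: (uniq_match cfr hab hv (eqP Pu0)).
rewrite big1 => [|v _]; last by case: ifP => // h; have := none v; rewrite /= h.
by rewrite normr0 -natC ler0n.
Qed.

Lemma corr_eq (a : 'I_K) tau j : tau = (j * N)%N -> (0 < j < N.+1)%N ->
  cmag (pcorr (N * N.+1)%N (cfr_seq R pi a) (cfr_seq R pi a) tau) = N.+1%:R.
Proof.
move=> tauE /andP[j0 jN]; rewrite corrE.
have sh (u : 'I_N) : ordN (u + tau) = u.
  by apply: ord_inj; rewrite ordNE tauE addnC modnMDl modn_small.
set y := z ^+ (N * tau)%N.
rewrite (eq_bigr (fun u : 'I_N => N.+1%:R * y ^+ (pi a u))) => [|u _]; last first.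
  rewrite sh eqxx; congr (_ * _); rewrite /y -exprM; apply: zXeq.
  have -> : (pi a u * u + N * (pi a u * (u + tau)) = pi a u * u * N.+1 + N * tau * pi a u)%N by ring.
  by rewrite modnMDl.
rewrite -mulr_sumr.
have -> : \sum_(u < N) y ^+ (pi a u) = \sum_(w < N) y ^+ w.
  by rewrite [RHS](reindex_inj (@perm_inj _ (pi a))).
have y1 : y != 1.
  apply/negP => /eqP /zX_eq1; rewrite tauE Gauss_dvdr ?coprimeSn // mulnC Gauss_dvdr ?coprimeSn //.
  by move=> /(dvdn_leq j0); rewrite leqNgt jN.
have yN : y ^+ N.+1 = 1 by rewrite /y -exprM mulnC exprM zXN1 expr1n.
have := geo y1 yN; rewrite big_ord_recr /= => /eqP; rewrite addr_eq0 => /eqP ->.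
by rewrite /cmag normrM normrN /y -exprM normz normr_nat mulr1 natC.
Qed.

Lemma term_le (a b : 'I_K) (tau : nat) : is_CFR pi -> (tau < N * N.+1)%N ->
  (a != b) || (tau != 0%N) ->
  cmag (pcorr (N * N.+1)%N (cfr_seq R pi a) (cfr_seq R pi b) tau) <= N.+1%:R.
Proof.
move=> cfr tL h.
case hab: ((a != b) || (tau %% N != 0)%N); first exact: corr_le.
move: hab h => /norP[/negPn/eqP <- /negPn/eqP tN]; rewrite eqxx /= => t0.
have tE : tau = (tau %/ N * N)%N by rewrite divnK // /dvdn tN.
rewrite (corr_eq a tE) //; apply/andP; split.
  by rewrite divn_gt0 // leqNgt; apply/negP => tlt; move: t0; rewrite tE divn_small.
by rewrite ltn_divLR // mulnC.
Qed.

Lemma theta_maxE : (0 < K)%N -> is_CFR pi -> theta_max R pi = N.+1%:R.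
Proof.
move=> K0 cfr; apply/eqP; rewrite eq_le; apply/andP; split.
  apply: bigmax_le => [|a _]; first exact: ler0n.
  apply: bigmax_le => [|b _]; first exact: ler0n.
  apply: bigmax_le => [|tau h]; first exact: ler0n.
  exact: term_le.
pose a0 := Ordinal K0.
have tN : (N < N * N.+1)%N by rewrite mulnS; have := N0; lia.
pose t0 := Ordinal tN.
apply: le_trans (le_bigmax _ _ a0); apply: le_trans (le_bigmax _ _ a0).
apply: le_trans (le_bigmax_cond _ _ (j := t0) _).
  by rewrite (corr_eq a0 (j := 1)) ?mul1n.
by apply/orP; right; rewrite -lt0n.
Qed.
End Corr.


Lemma ratio_bound (R : realType) (eps : R) (N K : nat) : 0 < eps -> (0 < N)%N -> (1 < K)%N ->
  1 < eps * (K%:R - 1) ->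
  `| N.+1%:R / theta_opti R K (N * N.+1)%N N - 1 | < eps.
Proof.
move=> e0 N0 K1 hK.
rewrite /theta_opti natrM -natr1.
have n1 : 1 <= (N%:R : R) by rewrite ler1n.
have k2 : 2 <= (K%:R : R) by rewrite ler_nat.
set n : R := N%:R; set k : R := K%:R.
set L := n * (n + 1).
have L0 : 0 < L by rewrite /L; nra.
have Ln : L - n = n ^+ 2 by rewrite /L; ring.
set X := ((k - 1) * L + n) / ((L - n) * (k * L - 1)).
have den0 : 0 < (k - 1) * L + n by nra.
have den1 : 0 < k * L - 1 by nra.
have X0 : 0 < X by rewrite /X Ln divr_gt0 // mulr_gt0 // exprn_gt0 //; lra.
set s := Num.sqrt X.
have s0 : 0 < s by rewrite /s sqrtr_gt0.
have s2 : s ^+ 2 = X by rewrite /s sqr_sqrtr // ltW.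
set r := (n + 1) / (L * s).
have r0 : 0 <= r by rewrite /r divr_ge0 // ?mulr_ge0; lra.
have hQ : r ^+ 2 = (k * L - 1) / ((k - 1) * L + n).
  rewrite /r expr_div_n exprMn s2 /X Ln /L; field.
  rewrite -/n -/k -/L; apply/and4P; split; apply: lt0r_neq0 => //; lra.
have Q1 : 1 <= (k * L - 1) / ((k - 1) * L + n).
  rewrite ler_pdivlMr // mul1r; rewrite /L; nra.
have Q2 : (k * L - 1) / ((k - 1) * L + n) < 1 + eps.
  rewrite ltr_pdivrMr //.
  have : L < eps * (k - 1) * L by rewrite -{1}(mul1r L) ltr_pM2r.
  nra.
rewrite -hQ in Q1 Q2.
have r1 : 1 <= r by nra.
have r2 : r < 1 + eps by nra.
rewrite ger0_norm; lra.
Qed.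


Lemma generic (R : realType) (S : nat -> Prop) :
  (forall C : nat, exists N0 : nat, forall N, (N0 <= N)%N -> S N ->
      (0 < N)%N /\ exists c, (C < c)%N /\ forall d, (0 < d < c)%N -> coprime d N) ->
  ratio_tends_to_1 R S.
Proof.
move=> H eps e0.
have [b hb] : exists b : nat, eps^-1 < b%:R.
  by exists (Num.Def.archi_bound (eps^-1)); apply: archi_boundP; rewrite invr_ge0 ltW.
have [N0 HN0] := H b.+2.
exists N0 => N NN0 SN K pi FK cfr.
have [Npos [c [Cc cop]]] := HN0 N NN0 SN.
have Kc := Ftilde_ge Npos FK cop.
have CK : (b.+2 <= K)%N by lia.
rewrite theta_maxE //; last by lia.
apply: ratio_bound => //; first by lia.
have h1 : eps^-1 < K%:R - 1.
  have : (b.+2%:R : R) <= K%:R by rewrite ler_nat.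
  rewrite -!natr1; move: hb; set y := eps^-1; set bb := (b%:R : R); set kk := (K%:R : R).
  clearbody y bb kk; lra.
by rewrite -[X in X < _](mulfV (lt0r_neq0 e0)) ltr_pM2l.
Qed.

Lemma cop_prime p d : prime p -> (0 < d < p)%N -> coprime d p.
Proof.
move=> pp /andP[d0 dp]; rewrite coprime_sym prime_coprime //.
by apply/negP => /(dvdn_leq d0); rewrite leqNgt dp.
Qed.

Local Open Scope ring_scope.
Unset Implicit Arguments.

Theorem corollary1 (R : realType) :
  [/\ ratio_tends_to_1 R (fun N => [&& odd N, (3 <= N)%N & odd_prime N]),
      (forall k : nat, (0 < k)%N ->
         ratio_tends_to_1 R (fun N => [/\ odd N, (3 <= N)%N & family2 k N])) &
      (forall H : seq nat, uniq H -> admissible H ->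
         ratio_tends_to_1 R (fun N => [/\ odd N, (3 <= N)%N & family3 H N]))].
Proof.
split.
- apply: generic => C; exists C.+1 => N NN /and3P[_ N3 /andP[pN _]].
  split; first by lia.
  by exists N; split => // d hd; apply: cop_prime.
- move=> k _; apply: generic => C; exists (C * (C + k)).+1.
  move=> N NN [_ N3 [p [/andP[pp _] /andP[pk _] NE]]].
  split; first by lia.
  exists p; split.
    rewrite ltnNge; apply/negP => pC.
    have : (N <= C * (C + k))%N by rewrite NE leq_mul // leq_add2r.
    by lia.
  move=> d /andP[d0 dp]; rewrite NE coprimeMr !cop_prime // ?d0 ?dp //.
  by apply/andP; split => //; lia.
- move=> H _ _; apply: generic => C; exists (\prod_(k <- H) (C + k)).+1%N.
  move=> N NN [_ N3 [m [pr NE]]].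
  split; first by lia.
  exists m; split.
    rewrite ltnNge; apply/negP => mC.
    have : (N <= \prod_(k <- H) (C + k))%N.
      by rewrite NE; apply: leq_prod => k _; rewrite leq_add2r.
    by lia.
  move=> d /andP[d0 dm]; rewrite NE big_seq.
  elim/big_rec: _ => [|k x kH cx]; first exact: coprimen1.
  rewrite coprimeMr cx andbT; apply: cop_prime.
    by have /andP[] := pr k kH.
  by apply/andP; split => //; lia.
Qed.
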